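(* Let $m\le n$ be nonnegative integers and $\delta=(\delta_1,\dots,\delta_m)\in\mathbb N^m$. Then every highest weight vertex $b=b_1\otimes\cdots\otimes b_m$ of the $C_n$-crystal $B^{C_n}_\delta=B^{C_n}_{\delta_1}\otimes\cdots\otimes B^{C_n}_{\delta_m}$ contains only letters from the set $\{1,2,\dots,m,\overline{m-1},\overline{m-2},\dots,\overline{1}\}$ (i.e., every letter of every word $b_j$ lies in this set).
   Context: The crystal $B_1^{C_n}$ of the vector representation of $U_q(\mathfrak{sp}_{2n})$ has vertices $1,\dots,n,\overline n,\dots,\overline1$, weights $\mathrm{wt}(i)=\varepsilon_i$, $\mathrm{wt}(\overline i)=-\varepsilon_i$, and arrows $i\xrightarrow{i}i+1$, $\overline{i+1}\xrightarrow{i}\overline i$ for $1\le i<n$, $n\xrightarrow{n}\overline n$. $B^{C_n}_s$ is the Kashiwara–Nakashima crystal $B(s\omega_1)$, whose vertices are labelled by the weakly decreasing words $x_1x_2\cdots x_s$ ($x_1\ge\cdots\ge x_s$) in the ordered alphabet $1<2<\cdots<n<\overline n<\cdots<\overline1$; $B_0$ has one vertex (the empty word). Tensor products use the rule $\tilde f_i(b\otimes b')=\tilde f_ib\otimes b'$ if $\varphi_i(b)>\varepsilon_i(b')$ and $b\otimes\tilde f_ib'$ otherwise; $\tilde e_i(b\otimes b')=\tilde e_ib\otimes b'$ if $\varphi_i(b)\ge\varepsilon_i(b')$ and $b\otimes\tilde e_ib'$ otherwise. A highest weight vertex is one with $\varepsilon_i(b)=0$ for all $i\in\{1,\dots,n\}$.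 *)

(* Defs.v *)
From mathcomp Require Import all_boot.
Set Implicit Arguments. Unset Strict Implicit. Unset Printing Implicit Defensive.

(* Letters of the crystal B_1 of type C_n.
   [Unb i] is the letter (i+1) and [Bar i] is the letter \overline{i+1},
   for i : 'I_n (so the letters are 1..n, \bar n .. \bar 1). *)
Inductive letter (n : nat) : Type :=
| Unb of 'I_n
| Bar of 'I_n.

Definition lval n (x : letter n) : nat :=
  match x with Unb i => (val i).+1 | Bar i => (val i).+1 end.

(* position in the total order 1 < 2 < ... < n < \bar n < ... < \bar 1 *)
Definition lrank n (x : letter n) : nat :=
  match x with Unb i => val i | Bar i => (2 * n).-1 - val i end.

(* vertices of B_s = B(s omega_1): weakly decreasing words x_1 >= ... >= x_s *)
Definition decreasing_word n (w : seq (letter n)) : bool :=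
  sorted (fun x y => lrank y <= lrank x) w.

(* phi_i and eps_i on B_1, for i in {1..n}, from the arrows
   i -i-> i+1,  \bar(i+1) -i-> \bar i  (1 <= i < n),  n -n-> \bar n. *)
Definition phi1 n (i : nat) (x : letter n) : nat :=
  match x with
  | Unb j => if lval x == i then 1 else 0
  | Bar j => if (i < n) && (lval x == i.+1) then 1 else 0
  end.
Definition eps1 n (i : nat) (x : letter n) : nat :=
  match x with
  | Unb j => if (i < n) && (lval x == i.+1) then 1 else 0
  | Bar j => if lval x == i then 1 else 0
  end.

(* eps_i and phi_i of the tensor product x_1 (x) x_2 (x) ... (x) x_N, with the
   tensor product rule of the paper (Kashiwara convention):
   eps(b (x) b') = eps(b) + max(0, eps(b') - phi(b)),
   phi(b (x) b') = phi(b') + max(0, phi(b) - eps(b')). *)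
Fixpoint epsw n (i : nat) (w : seq (letter n)) : nat :=
  match w with
  | [::] => 0
  | x :: w' => eps1 i x + (epsw i w' - phi1 i x)
  end.
Fixpoint phiw n (i : nat) (w : seq (letter n)) : nat :=
  match w with
  | [::] => 0
  | x :: w' => phiw i w' + (phi1 i x - epsw i w')
  end.

Definition in_B_delta n (delta : seq nat) (b : seq (seq (letter n))) : Prop :=
  map size b = delta /\ all (@decreasing_word n) b.

(* highest weight: eps_i(b) = 0 for all i in {1..n}; B_s embeds in B_1^{(x) s}
   via x_1...x_s |-> x_1 (x) ... (x) x_s, so b is viewed as the flattened tensor *)
Definition highest_weight n (b : seq (seq (letter n))) : Prop :=
  forall i, 1 <= i <= n -> epsw i (flatten b) = 0.

Definition allowed_letter n (m : nat) (x : letter n) : bool :=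
  match x with
  | Unb _ => lval x <= m
  | Bar _ => lval x <= m.-1
  end.

(* Main.v *)
Require Import Defs.
From mathcomp Require Import all_boot all_algebra zify.
Import GRing.Theory Num.Theory.

Section S.
Variable n : nat.
Implicit Types p s w : seq (letter n).

Lemma cat_both i p s :
  epsw i (p ++ s) = epsw i p + (epsw i s - phiw i p) /\
  phiw i (p ++ s) = phiw i s + (phiw i p - epsw i s).
Proof.
elim: p => [|x p [IH1 IH2]] /=; first lia.
rewrite IH1 IH2; split; lia.
Qed.

Definition cv (v : nat) (x : letter n) : int :=
  match x with
  | Unb j => if j.+1 == v then 1%R else 0%R
  | Bar j => if j.+1 == v then (-1)%R else 0%R end.

Fixpoint cw v p : int := match p with [::] => 0%R | x :: p => (cv v x + cw v p)%R end.

Lemma cw_cat v p s : cw v (p ++ s) = (cw v p + cw v s)%R.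
Proof. elim: p => [|x p IH] /=; lia. Qed.

Lemma hc i x : 0 < i <= n ->
  ((phi1 i x)%:Z - (eps1 i x)%:Z = cv i x - cv i.+1 x)%R.
Proof.
move=> Hi; case: x => j; have := ltn_ord j;
rewrite /phi1 /eps1 /cv /=;
case: (ltnP i n) => /= Hin Hj;
repeat case: eqP => /=; lia.
Qed.

Lemma phieps i p : 0 < i <= n ->
  ((phiw i p)%:Z - (epsw i p)%:Z = cw i p - cw i.+1 p)%R.
Proof.
move=> Hi; elim: p => [|x p IH] /=; first lia.
have := hc i x Hi; lia.
Qed.

Definition HW p := forall i, 0 < i <= n -> epsw i p = 0.

Lemma cw_big p : cw n.+1 p = 0%R.
Proof.
elim: p => [|x p IH] //=; rewrite IH; case: x => j /=; have := ltn_ord j;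
case: eqP; lia.
Qed.

Lemma cw_nonneg p k : HW p -> 0 < k <= n.+1 -> (0 <= cw k p)%R.
Proof.
move=> H Hk.
have: forall d, d <= n -> (0 <= cw (n.+1 - d) p)%R.
  elim=> [|d IH] Hd; first by rewrite subn0 cw_big.
  have := IH (ltnW Hd). have := phieps (n.+1 - d.+1) p.
  rewrite (H (n.+1 - d.+1)); last lia.
  have -> : (n.+1 - d.+1).+1 = n.+1 - d by lia.
  move=> /(_ _); lia.
move=> /(_ (n.+1 - k)); have -> : n.+1 - (n.+1 - k) = k by lia.
move=> /(_ _); lia.
Qed.

Lemma step i p x : HW p -> HW (p ++ [:: x]) -> 0 < i <= n ->
  ((eps1 i x)%:Z <= cw i p - cw i.+1 p)%R.
Proof.
move=> H1 H2 Hi.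
have := H2 i Hi; case: (cat_both i p [:: x]) => -> _.
rewrite (H1 i Hi) /=. have := phieps i p Hi. rewrite (H1 i Hi). lia.
Qed.


Lemma HW_pre p s : HW (p ++ s) -> HW p.
Proof.
move=> H i Hi; have := H i Hi; case: (cat_both i p s) => -> _; lia.
Qed.

Lemma cw_nonpos v q : all (fun y => (cv v y <= 0)%R) q -> (cw v q <= 0)%R.
Proof. elim: q => [|y q IH] //= /andP[H1 /IH]; lia. Qed.

Lemma all_split (P : letter n -> bool) w :
  (forall w1 x w2, w = w1 ++ x :: w2 -> P x) -> all P w.
Proof.
elim: w => [|y w IH] H //=; apply/andP; split.
  exact: (H [::] y w).
apply: IH => w1 x w2 E; apply: (H (y :: w1) x w2); by rewrite E.
Qed.

Lemma word_ok pre w s J : 0 < J -> HW (pre ++ w ++ s) -> decreasing_word w ->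
  (forall k, J <= k -> (cw k pre <= 0)%R) -> all (allowed_letter J) w.
Proof.
move=> J0 H Hd Hpre; apply: all_split => w1 x w2 E.
have Hr : all (fun y => lrank x <= lrank y) w1.
  move: Hd; rewrite /decreasing_word (sorted_pairwise); last first.
    by move=> a b c /= H1 H2; apply: leq_trans H2 H1.
  rewrite E pairwise_cat => /and3P[Ha _ _].
  by apply: sub_all Ha => y /= /andP[].
have E2 : pre ++ w ++ s = (pre ++ w1 ++ [:: x]) ++ (w2 ++ s).
  by rewrite E -!catA.
have H2 : HW ((pre ++ w1) ++ [:: x]) by rewrite -catA; apply: (HW_pre _ (w2 ++ s)); rewrite -E2.
have H1 : HW (pre ++ w1) by apply: HW_pre _ _ H2.
clear E2 H; case: x E Hr H2 => j E Hr H2 /=; have := ltn_ord j; move=> jn.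
- rewrite leqNgt; apply/negP => Jj.
  have Hj : 0 < j <= n by lia.
  have := step j _ (Unb j) H1 H2 Hj.
  rewrite /eps1 /= jn eqxx /=.
  have := cw_nonneg _ j.+1 H1 (ltac:(lia)).
  have := Hpre j (ltac:(lia)).
  have : (cw j w1 <= 0)%R.
    apply: cw_nonpos; apply: sub_all Hr => y /=.
    case: y => k /=; case: eqP => // E1; move: E1 => /eqP; rewrite /lrank /= => /eqP E1 Hk; lia.
  rewrite !cw_cat; lia.
- rewrite leqNgt; apply/negP => Jj.
  have Hj : 0 < j.+1 <= n by lia.
  have := step j.+1 _ (Bar j) H1 H2 Hj.
  rewrite /eps1 /= eqxx /=.
  have := cw_nonneg _ j.+2 H1 (ltac:(lia)).
  have := Hpre j.+1 (ltac:(lia)).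
  have : (cw j.+1 w1 <= 0)%R.
    apply: cw_nonpos; apply: sub_all Hr => y /=.
    case: y => k /=; case: eqP => //; lia.
  rewrite !cw_cat; lia.
Qed.

Lemma outer rest pre J : 0 < J -> HW (pre ++ flatten rest) -> all (@decreasing_word n) rest ->
  (forall k, J <= k -> (cw k pre <= 0)%R) -> forall m, size rest + J <= m.+1 ->
  all (fun bj => all (allowed_letter m) bj) rest.
Proof.
elim: rest pre J => [|w rest IH] pre J J0 H //= /andP[Hd Hds] Hpre m Hm.
have Hw := word_ok _ _ (flatten rest) _ J0 H Hd Hpre.
apply/andP; split.
  apply: sub_all Hw => -[] j /=; lia.
apply: (IH (pre ++ w) J.+1) => //; first by rewrite -catA.
  move=> k Jk; rewrite cw_cat.
  have : (cw k w <= 0)%R.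
    apply: cw_nonpos; apply: sub_all Hw => -[] j /=; case: eqP => //; lia.
  have := Hpre k (ltnW Jk); lia.
lia.
Qed.

End S.

Theorem lemma25 (n m : nat) (delta : seq nat) (b : seq (seq (letter n))) :
  m <= n -> size delta = m ->
  in_B_delta delta b -> highest_weight b ->
  all (fun bj => all (allowed_letter m) bj) b.
Proof.
move=> _ Hs [Hmap Hd] Hhw.
apply: (outer _ _ [::] 1) => //.
by rewrite -Hs -Hmap size_map addn1.
Qed.
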